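(* Let $\mathrm{K}=\begin{bmatrix}A&B\\C&D\end{bmatrix}$ with $A\in\mathbb{C}^{n\times n}$, $B\in\mathbb{C}^{n\times m}$, $C\in\mathbb{C}^{m\times n}$, $D\in\mathbb{C}^{m\times m}$, $m\ge 3$, and let $\Lambda=\{\lambda_1,\lambda_2,\lambda_3\}$ be three distinct complex numbers none of which is an eigenvalue of $A$. If $X\in\mathbb{C}^{m\times m}$ is such that the spectrum of $\mathrm{K}_X=\begin{bmatrix}A&B\\C&X\end{bmatrix}$ contains $\Lambda$, then for every $\gamma=(\gamma_{12},\gamma_{13},\gamma_{23})\in\mathbb{C}^3$, \[\|X-D\|_2\ \ge\ s_{3m-2}\big(\mathcal{S}_3(D,\gamma)\big).\]
   Context: $s_j(\cdot)$ denotes the $j$-th largest singular value, $\|\cdot\|_2$ the spectral norm. Write $A_i^{-1}=(A-\lambda_iI_n)^{-1}$, $D_i=D-\lambda_iI_m$, and $M_i=D_i-CA_i^{-1}B$, $N_{ij}=I_m+CA_i^{-1}A_j^{-1}B$, $P_{123}=CA_1^{-1}A_2^{-1}A_3^{-1}B$. Then \[\mathcal{S}_3(D,\gamma)=\begin{bmatrix}M_1&\gamma_{12}N_{12}&\gamma_{13}N_{13}-\gamma_{12}\gamma_{23}P_{123}\\0&M_2&\gamma_{23}N_{23}\\0&0&M_3\end{bmatrix}\in\mathbb{C}^{3m\times 3m}.\] *)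

(* Defs.v *)
From HB Require Import structures.
From mathcomp Require Import all_boot all_order all_algebra all_field.
From mathcomp Require Import reals complex.
Set Implicit Arguments. Unset Strict Implicit. Unset Printing Implicit Defensive.
Import Order.TTheory GRing.Theory Num.Theory.
Local Open Scope ring_scope.

Section Generic.
Variable F : numClosedFieldType.

Definition adjmx (p q : nat) (M : 'M[F]_(p, q)) : 'M[F]_(q, p) :=
  map_mx (@Num.conj F) M^T.

Definition gram_eigs (p q : nat) (M : 'M[F]_(p, q)) : seq F :=
  sval (closed_field_poly_normal (char_poly (adjmx M *m M))).

Definition sq_svals (p q : nat) (M : 'M[F]_(p, q)) : seq F :=
  sort (fun x y : F => y <= x) (gram_eigs M).

(* s_j(M), 1-indexed: j-th largest singular value *)
Definition sval_j (j : nat) (p q : nat) (M : 'M[F]_(p, q)) : F :=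
  sqrtC (nth 0 (sq_svals M) j.-1).

Definition spec_norm (p q : nat) (M : 'M[F]_(p, q)) : F := sval_j 1 M.

End Generic.

Section S3.
Variable F : numClosedFieldType.
Variables (n m : nat) (A : 'M[F]_n) (B : 'M[F]_(n, m))
  (C : 'M[F]_(m, n)) (D : 'M[F]_m).

Definition Ainv (l : F) : 'M[F]_n := invmx (A - l%:M).
Definition Mi (l : F) : 'M[F]_m := (D - l%:M) - C *m Ainv l *m B.
Definition Nij (li lj : F) : 'M[F]_m := 1%:M + C *m Ainv li *m Ainv lj *m B.
Definition P123 (l1 l2 l3 : F) : 'M[F]_m :=
  C *m Ainv l1 *m Ainv l2 *m Ainv l3 *m B.

Definition S3 (l1 l2 l3 g12 g13 g23 : F) : 'M[F]_(m + (m + m)) :=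
  block_mx (Mi l1)
           (row_mx (g12 *: Nij l1 l2) (g13 *: Nij l1 l3 - (g12 * g23) *: P123 l1 l2 l3))
           0
           (block_mx (Mi l2) (g23 *: Nij l2 l3) 0 (Mi l3)).
End S3.

(* Main.v *)
Require Import Defs.
From HB Require Import structures.
From mathcomp Require Import all_boot all_order all_algebra all_field.
From mathcomp Require Import reals complex.
From mathcomp Require Import ring zify.
Set Implicit Arguments. Unset Strict Implicit. Unset Printing Implicit Defensive.
Import Order.TTheory GRing.Theory Num.Theory.
Local Open Scope ring_scope.


Lemma zl (V : zmodType) (a b : V) : a - (- b + a) - b = 0.
Proof. by rewrite opprD opprK addrA addrAC subrr add0r subrr. Qed.

Section AlgA.
Variable F : numClosedFieldType.
Variables (n m : nat) (A : 'M[F]_n) (B : 'M[F]_(n, m)) (C : 'M[F]_(m, n)).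

Lemma unit_noneig (l : F) : ~~ eigenvalue A l -> (A - l%:M) \in unitmx.
Proof.
move=> H; rewrite -row_free_unit -kermx_eq0; apply: contraR H => H.
by apply/eigenvalueP; move/rowV0Pn: H => [v /sub_kermxP Hv nz]; exists v => //;
  apply/eqP; rewrite -subr_eq0 -mul_mx_scalar -mulmxBr Hv.
Qed.

Lemma Mi_sing (X : 'M[F]_m) l : ~~ eigenvalue A l ->
  eigenvalue (block_mx A B C X) l -> (\rank (Mi A B C X l) < m)%N.
Proof.
move=> /unit_noneig U /eigenvalueP [v Hv nz].
rewrite -[v]hsubmxK mul_row_block scale_row_mx in Hv.
move/eq_row_mx: Hv => [H1 H2].
set v1 := lsubmx v in H1 H2 nz *; set v2 := rsubmx v in H1 H2 nz *.
have E1 : v1 = - (v2 *m C *m Ainv A l).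
  have H : v1 *m (A - l%:M) = - (v2 *m C).
    by rewrite mulmxBr mul_mx_scalar -H1 opprD addrA subrr add0r.
  by rewrite -(mulmxK U v1) H mulNmx.
have E2 : v2 *m Mi A B C X l = 0.
  rewrite /Mi !mulmxBr mul_mx_scalar -H2 E1 !mulNmx !mulmxA.
  exact: zl.
have v2nz : v2 != 0.
  apply: contraNneq nz => v20; rewrite -[v]hsubmxK -/v1 -/v2 E1 v20 !mul0mx oppr0.
  by rewrite row_mx0.
rewrite ltn_neqAle rank_leq_row andbT; apply: contraNneq v2nz => rk.
by rewrite -(mulmx_free_eq0 _ (_ : row_free (Mi A B C X l))) ?E2 // /row_free rk.
Qed.
End AlgA.


Section AlgB.
Variable F : numClosedFieldType.
Variables (n m : nat) (A : 'M[F]_n) (B : 'M[F]_(n, m)) (C : 'M[F]_(m, n)).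

Lemma resolvent l1 l2 : (A - l1%:M) \in unitmx -> (A - l2%:M) \in unitmx ->
  Ainv A l1 - Ainv A l2 = (l1 - l2) *: (Ainv A l1 *m Ainv A l2).
Proof.
move=> U1 U2; rewrite /Ainv.
have E : invmx (A - l1%:M) *m ((A - l2%:M) - (A - l1%:M)) *m invmx (A - l2%:M)
   = invmx (A - l1%:M) - invmx (A - l2%:M).
  by rewrite mulmxBr mulmxBl mulmxK // mulVmx // mul1mx.
rewrite -E.
have -> : A - l2%:M - (A - l1%:M) = (l1 - l2)%:M.
  by rewrite opprB addrC addrA subrK raddfB.
by rewrite mul_mx_scalar scalemxAl.
Qed.


Variable X : 'M[F]_m.
Lemma MiB l1 l2 : (A - l1%:M) \in unitmx -> (A - l2%:M) \in unitmx ->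
  Mi A B C X l1 - Mi A B C X l2 = (l2 - l1) *: Nij A B C l1 l2.
Proof.
move=> U1 U2.
have H : C *m Ainv A l1 *m B = (l1 - l2) *: (C *m Ainv A l1 *m Ainv A l2 *m B) + C *m Ainv A l2 *m B.
  apply/eqP; rewrite -subr_eq; apply/eqP.
  by rewrite -mulmxBl -mulmxBr resolvent // -scalemxAr -scalemxAl !mulmxA.
rewrite /Mi /Nij H; apply/matrixP => i j; rewrite !mxE; ring.
Qed.

Lemma NijB l1 l2 l3 : (A - l2%:M) \in unitmx -> (A - l3%:M) \in unitmx ->
  Nij A B C l1 l2 - Nij A B C l1 l3 = (l2 - l3) *: P123 A B C l1 l2 l3.
Proof.
move=> U2 U3.
rewrite /Nij /P123 opprD addrACA subrr add0r.
by rewrite -mulmxBl -mulmxBr resolvent // -!scalemxAr -scalemxAl !mulmxA.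
Qed.

Lemma S3_fact l1 l2 l3 g12 g13 g23 :
  (A - l1%:M) \in unitmx -> (A - l2%:M) \in unitmx -> (A - l3%:M) \in unitmx ->
  l1 != l2 -> l1 != l3 -> l2 != l3 ->
  exists a b e x y z : F,
  S3 A B C X l1 l2 l3 g12 g13 g23 =
   (block_mx 1%:M (row_mx (a%:M) (b%:M)) 0 (block_mx 1%:M (e%:M) 0 1%:M)) *m
   (block_mx (Mi A B C X l1) 0 0 (block_mx (Mi A B C X l2) 0 0 (Mi A B C X l3))) *m
   (block_mx 1%:M (row_mx (x%:M) (y%:M)) 0 (block_mx 1%:M (z%:M) 0 1%:M)).
Proof.
move=> U1 U2 U3 d12 d13 d23.
set M1 := Mi A B C X l1; set M2 := Mi A B C X l2; set M3 := Mi A B C X l3.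
set k12 := (l2 - l1)^-1; set k13 := (l3 - l1)^-1; set k23 := (l3 - l2)^-1;
set k := (l2 - l3)^-1.
exists (- (g12 * k12)), (- g13 * k13 - g12 * g23 * k * k13), (- (g23 * k23)),
  (g12 * k12), (g13 * k13 - g12 * g23 * k * (k12 - k13)), (g23 * k23).
rewrite !(mulmx_block, mul_row_block, mul_mx_row, mul0mx, mulmx0, mul1mx, mulmx1, add0r, addr0).
rewrite add_row_mx !(mul_mx_scalar, mul_scalar_mx).
have n12 : l2 - l1 != 0 by rewrite subr_eq0 eq_sym.
have n13 : l3 - l1 != 0 by rewrite subr_eq0 eq_sym.
have n23 : l3 - l2 != 0 by rewrite subr_eq0 eq_sym.
have n23' : l2 - l3 != 0 by rewrite subr_eq0.
have inv_sc (c : F) (N Y : 'M[F]_m) : c != 0 -> Y = c *: N -> N = c^-1 *: Y.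
  by move=> c0 ->; rewrite scalerA mulVf // scale1r.
have e12 := inv_sc _ _ _ n12 (MiB U1 U2).
have e13 := inv_sc _ _ _ n13 (MiB U1 U3).
have e23 := inv_sc _ _ _ n23 (MiB U2 U3).
have eP := inv_sc _ _ _ n23' (NijB l1 U2 U3).
have hk : k23 = - k by rewrite /k23 /k -invrN opprB.
rewrite /S3 eP e12 e13 e23 -/M1 -/M2 -/M3 -/k12 -/k13 -/k23 -/k hk.
congr block_mx; first (congr row_mx); try (congr block_mx);
  apply/matrixP => i j; rewrite !mxE; ring.
Qed.
End AlgB.

Section SpecSec.
Local Open Scope sesquilinear_scope.

Section Spec.
Variable F : numClosedFieldType.

Definition nsq p (v : 'rV[F]_p) : F := \sum_j v 0 j * (v 0 j)^*.

Lemma nsq_ge0 p (v : 'rV[F]_p) : 0 <= nsq v.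
Proof. by apply: sumr_ge0 => j _; exact: mul_conjC_ge0. Qed.

Lemma nsq_gt0 p (v : 'rV[F]_p) : v != 0 -> 0 < nsq v.
Proof.
move=> nz; have [j vj] : exists j, v 0 j != 0.
  apply/existsP; apply: contraNT nz; rewrite negb_exists => /forallP H.
  by apply/eqP/rowP => j; rewrite mxE; apply/eqP; move: (H j); rewrite negbK.
rewrite /nsq (bigD1 j) //=; apply: ltr_wpDr.
  by apply: sumr_ge0 => i _; exact: mul_conjC_ge0.
by rewrite mul_conjC_gt0.
Qed.

Lemma nsqN p (v : 'rV[F]_p) : nsq (- v) = nsq v.
Proof. by apply: eq_bigr => j _; rewrite mxE rmorphN mulrNN. Qed.

Lemma mul_adj p q r (v : 'M[F]_(p, q)) (w : 'M[F]_(r, q)) i k : (v *m adjmx w) i k = \sum_j v i j * (w k j)^*.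
Proof. by rewrite mxE; apply: eq_bigr => j _; rewrite !mxE. Qed.

Lemma nsqE p (v : 'rV[F]_p) : nsq v = (v *m adjmx v) 0 0.
Proof. by rewrite mul_adj. Qed.

Lemma adjmxK p q (M : 'M[F]_(p, q)) : adjmx (adjmx M) = M.
Proof. by apply/matrixP => i j; rewrite !mxE conjCK. Qed.

Lemma adjmxM p q r (M : 'M[F]_(p, q)) (N : 'M[F]_(q, r)) :
  adjmx (M *m N) = adjmx N *m adjmx M.
Proof. by rewrite /adjmx trmx_mul map_mxM. Qed.

Lemma adjmxD p q (M N : 'M[F]_(p, q)) : adjmx (M + N) = adjmx M + adjmx N.
Proof. by apply/matrixP => i j; rewrite !mxE rmorphD. Qed.

Lemma adjmxN p q (M : 'M[F]_(p, q)) : adjmx (- M) = - adjmx M.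
Proof. by apply/matrixP => i j; rewrite !mxE rmorphN. Qed.

Lemma mxrank_adj p q (M : 'M[F]_(p, q)) : \rank (adjmx M) = \rank M.
Proof. by rewrite /adjmx mxrank_map mxrank_tr. Qed.


Lemma char_poly_sim q (Q P D : 'M[F]_q) : Q *m P = 1%:M ->
  char_poly (Q *m D *m P) = char_poly D.
Proof.
move=> QP; rewrite /char_poly /char_poly_mx !map_mxM.
set Q' := map_mx polyC Q; set P' := map_mx polyC P.
have QP' : Q' *m P' = 1%:M by rewrite /Q' /P' -map_mxM QP map_mx1.
have {1}-> : ('X%:M : 'M[{poly F}]_q) = Q' *m 'X%:M *m P'.
  by rewrite scalar_mxC -mulmxA QP' mulmx1.
by rewrite -mulmxBl -mulmxBr !det_mulmx mulrAC -det_mulmx QP' det1 mul1r.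
Qed.

Section Gram.
Variables (p q : nat) (M : 'M[F]_(p, q)).
Definition G := adjmx M *m M.
Definition Pm := spectralmx G.
Definition dg := spectral_diag G.

Lemma G_adj : adjmx G = G.
Proof. by rewrite /G adjmxM adjmxK. Qed.

Lemma G_normal : G \is normalmx.
Proof. by apply/normalmxP; rewrite -[G ^t* ]/(adjmx G) G_adj. Qed.

Lemma G_spec : G = adjmx Pm *m diag_mx dg *m Pm.
Proof.
have := orthomx_spectralP G_normal.
rewrite invmx_unitary ?spectral_unitarymx //.
Qed.

Lemma Pm_unit : Pm *m adjmx Pm = 1%:M.
Proof. exact/unitarymxP/spectral_unitarymx. Qed.

Lemma Pm_unit' : adjmx Pm *m Pm = 1%:M.
Proof.
have U := spectral_unitarymx G.
rewrite -[adjmx Pm]/(Pm ^t* ) -invmx_unitary // mulVmx //.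
exact: unitarymx_unit.
Qed.

Lemma quadE (u : 'rV[F]_q) :
  nsq (u *m adjmx M) = \sum_i dg 0 i * ((u *m adjmx Pm) 0 i * ((u *m adjmx Pm) 0 i)^* ).
Proof.
rewrite nsqE adjmxM adjmxK !mulmxA -(mulmxA u) -/G G_spec.
set z := u *m adjmx Pm.
have -> : u *m (adjmx Pm *m diag_mx dg *m Pm) *m adjmx u = z *m diag_mx dg *m adjmx z.
  by rewrite /z adjmxM adjmxK !mulmxA.
rewrite mul_adj; apply: eq_bigr => i _.
rewrite !mxE mulrA; congr (_ * _).
rewrite (bigD1 i) //= big1 ?addr0 ?mxE ?eqxx ?mulr1n.
  by rewrite mulrC.
by move=> k nk; rewrite [diag_mx _ _ _]mxE (negbTE nk) mulr0n mulr0.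
Qed.

Lemma nsq_Pm (u : 'rV[F]_q) : nsq (u *m adjmx Pm) = nsq u.
Proof. by rewrite !nsqE adjmxM adjmxK !mulmxA -(mulmxA u) Pm_unit' mulmx1. Qed.

Lemma dg_ge0 i : 0 <= dg 0 i.
Proof.
have := nsq_ge0 ((delta_mx 0 i *m Pm) *m adjmx M); rewrite quadE.
rewrite -mulmxA Pm_unit mulmx1 (bigD1 i) //= big1 ?addr0.
  by rewrite !mxE !eqxx /= conjC1 !mulr1.
by move=> j nj; rewrite !mxE (negbTE nj) andbF mul0r mulr0.
Qed.

Lemma gram_perm : perm_eq (gram_eigs M) [seq dg 0 i | i <- enum 'I_q].
Proof.
apply: prod_XsubC_eq; rewrite /gram_eigs.
case: (closed_field_poly_normal _) => r /= Hr.
have L1 : lead_coef (char_poly (adjmx M *m M)) = 1 by apply/monicP; exact: char_poly_monic.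
rewrite L1 scale1r in Hr; rewrite -Hr -/G {1}G_spec char_poly_sim ?Pm_unit' //.
rewrite char_poly_trig ?diag_mx_is_trig // big_map big_enum /=.
by apply: eq_bigr => i _; rewrite mxE eqxx mulr1n.
Qed.

Definition dl := [seq dg 0 i | i <- enum 'I_q].

Lemma ss_perm : perm_eq (sq_svals M) dl.
Proof. by rewrite /sq_svals perm_sort gram_perm. Qed.

Lemma ss_size : size (sq_svals M) = q.
Proof. by rewrite (perm_size ss_perm) size_map size_enum_ord. Qed.

Lemma dl_ge0 : all (fun x => 0 <= x) dl.
Proof. by apply/allP => x /mapP [i _ ->]; exact: dg_ge0. Qed.

Lemma ss_ge0 : all (fun x => 0 <= x) (sq_svals M).
Proof. by rewrite (perm_all _ ss_perm) dl_ge0. Qed.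

Let ge := fun x y : F => y <= x.
Lemma ge_trans : transitive ge.
Proof. by move=> x y z /= h1 h2; exact: le_trans h2 h1. Qed.
Lemma ge_refl : reflexive ge.
Proof. by move=> x; exact: lexx. Qed.

Lemma ss_sorted : sorted ge (sq_svals M).
Proof.
apply: (@sort_sorted_in _ (fun x : F => 0 <= x)).
  move=> x y x0 y0 /=; apply: real_leVge; exact: ger0_real.
by rewrite (perm_all _ (perm_trans (gram_perm) (perm_refl _))) dl_ge0.
Qed.

Lemma dg_le_head i : dg 0 i <= nth 0 (sq_svals M) 0.
Proof.
have : dg 0 i \in sq_svals M.
  by rewrite (perm_mem ss_perm); apply: map_f; rewrite mem_enum.
move=> /(nthP 0) [j jlt <-].
apply: (sorted_leq_nth ge_trans ge_refl 0 ss_sorted) => //.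
by rewrite inE (leq_ltn_trans _ jlt).
Qed.

Lemma count_ge k : (0 < k <= q)%N ->
  (k <= #|[pred i | (nth 0 (sq_svals M) k.-1 <= dg 0 i)%R]|)%N.
Proof.
move=> /andP [k0 kq]; set mu := nth 0 (sq_svals M) k.-1.
have cc (T : finType) (P : pred T) : #|P| = count P (enum T).
  by rewrite cardE /enum_mem size_filter /enum_mem filter_predT.
rewrite cc -(count_map (fun i => dg 0 i) (fun x => mu <= x)) -/dl.
rewrite -(permP ss_perm) -(cat_take_drop k (sq_svals M)) count_cat.
have Hk : (k <= size (sq_svals M))%N by rewrite ss_size.
have Hall : all (fun x => mu <= x) (take k (sq_svals M)).
  apply/(all_nthP 0) => j; rewrite size_takel // => jk; rewrite nth_take //.
  apply: (sorted_leq_nth ge_trans ge_refl 0 ss_sorted); rewrite ?inE.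
  - exact: leq_trans jk Hk.
  - by rewrite prednK // (leq_trans _ Hk).
  - by rewrite -ltnS prednK.
move: Hall; rewrite all_count => /eqP ->; rewrite size_takel //.
exact: leq_addr.
Qed.
End Gram.

Lemma upper q (E : 'M[F]_q) (u : 'rV[F]_q) :
  nsq (u *m adjmx E) <= nth 0 (sq_svals E) 0 * nsq u.
Proof.
rewrite quadE -(nsq_Pm E u) /nsq mulr_sumr; apply: ler_sum => i _.
rewrite !mxE; apply: ler_wpM2r; first exact: mul_conjC_ge0.
exact: dg_le_head.
Qed.

Lemma core q (S Fm : 'M[F]_q) k c : (0 < k <= q)%N -> (\rank (S + Fm)%R < k)%N ->
  (forall u : 'rV[F]_q, nsq (u *m adjmx Fm) <= c * nsq u) ->
  nth 0 (sq_svals S) k.-1 <= c.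
Proof.
move=> kq rkT Hc.
set mu := nth 0 (sq_svals S) k.-1.
set I := [pred i | mu <= dg S 0 i].
have rk : (k <= #|I|)%N by exact: count_ge.
set P := Pm S.
pose V : 'M[F]_(#|I|, q) := \matrix_(j, i) P (enum_val j) i.
have PP : forall a b, \sum_l P a l * (P b l)^* = (a == b)%:R.
  by move=> a b; rewrite -mul_adj Pm_unit mxE.
have VV : V *m adjmx V = 1%:M.
  apply/matrixP => j j'; rewrite mul_adj.
  under eq_bigr do rewrite !mxE.
  by rewrite PP mxE (inj_eq enum_val_inj).
have rV : \rank V = #|I|.
  apply/eqP; rewrite eqn_leq rank_leq_row /=.
  by rewrite -{1}(mxrank1 F #|I|) -VV mxrankM_maxl.
have rK : \rank (kermx (adjmx (S + Fm)%R)) = (q - \rank (S + Fm)%R)%N by rewrite mxrank_ker mxrank_adj.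
have capnz : (V :&: kermx (adjmx (S + Fm)%R))%MS != 0.
  rewrite -mxrank_eq0 -lt0n.
  have := mxrank_sum_cap V (kermx (adjmx (S + Fm)%R)); rewrite rV rK.
  have := rank_leq_col (V + kermx (adjmx (S + Fm)%R))%MS.
  have := rank_leq_col (S + Fm)%R.
  move: rk rkT.
  move: (\rank (S + Fm)%R) (\rank (V + kermx (adjmx (S + Fm)%R))%MS) (\rank (V :&: kermx (adjmx (S + Fm)%R))%MS) => a b c0.
  lia.
have [u uc unz] := rowV0Pn capnz.
have uV : (u <= V)%MS by apply: submx_trans uc (capmxSl _ _).
have uK : (u <= kermx (adjmx (S + Fm)%R))%MS by apply: submx_trans uc (capmxSr _ _).
have uT : u *m adjmx S = - (u *m adjmx Fm).
  move/sub_kermxP: uK; rewrite adjmxD mulmxDr => /eqP.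
  by rewrite addr_eq0 => /eqP.
have [w uw] := submxP uV.
have z0 : forall i, ~~ I i -> (u *m adjmx P) 0 i = 0.
  move=> i iI; rewrite uw -mulmxA mxE big1 // => j _.
  rewrite mul_adj.
  under eq_bigr do rewrite mxE.
  rewrite PP; case: eqP => [e|_]; last by rewrite mulr0.
  by move: (enum_valP j); rewrite e; move/negP: iI.
have npos := nsq_gt0 unz.
rewrite -(ler_pM2r npos).
apply: le_trans (Hc u); rewrite -[nsq (u *m adjmx Fm)]nsqN -uT quadE -(nsq_Pm S u) /nsq mulr_sumr.
apply: ler_sum => i _; rewrite [mu * _]mulrC [dg S 0 i * _]mulrC.
case Ii : (I i).
  apply: ler_wpM2l; first exact: mul_conjC_ge0.
  exact: Ii.
by rewrite -/P z0 ?Ii // conjC0 !mul0r.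
Qed.
End Spec.

End SpecSec.


Section Final.
Variable F : numClosedFieldType.

Lemma nsq_row p1 p2 (a : 'rV[F]_p1) (b : 'rV[F]_p2) :
  nsq (row_mx a b) = nsq a + nsq b.
Proof.
rewrite /nsq big_split_ord /=; congr (_ + _); apply: eq_bigr => i _.
  by rewrite row_mxEl.
by rewrite row_mxEr.
Qed.

Lemma adj_block p1 p2 q1 q2 (a : 'M[F]_(p1, q1)) (b : 'M[F]_(p1, q2))
  (c : 'M[F]_(p2, q1)) (d : 'M[F]_(p2, q2)) :
  adjmx (block_mx a b c d) = block_mx (adjmx a) (adjmx c) (adjmx b) (adjmx d).
Proof. by rewrite /adjmx tr_block_mx map_block_mx. Qed.

Lemma adj0 p q : adjmx (0 : 'M[F]_(p, q)) = 0.
Proof. by apply/matrixP => i j; rewrite !mxE conjC0. Qed.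

Lemma diag3_bound m (E : 'M[F]_m) c :
  (forall v : 'rV[F]_m, nsq (v *m adjmx E) <= c * nsq v) ->
  forall u : 'rV[F]_(m + (m + m)),
  nsq (u *m adjmx (block_mx E 0 0 (block_mx E 0 0 E))) <= c * nsq u.
Proof.
move=> H u; rewrite !adj_block !adj0.
rewrite -[u]hsubmxK -[rsubmx u]hsubmxK.
rewrite !mul_row_block !(mulmx0, addr0, add0r) !nsq_row !mulrDr.
by apply: lerD; [|apply: lerD]; apply: H.
Qed.

Variables (n m : nat) (A : 'M[F]_n) (B : 'M[F]_(n, m)) (C : 'M[F]_(m, n)).

Lemma Mi_X (D X : 'M[F]_m) l : Mi A B C X l = Mi A B C D l + (X - D).
Proof. by rewrite /Mi; apply/matrixP => i j; rewrite !mxE; ring. Qed.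

Lemma S3_add (D X : 'M[F]_m) l1 l2 l3 g12 g13 g23 :
  S3 A B C X l1 l2 l3 g12 g13 g23 = S3 A B C D l1 l2 l3 g12 g13 g23 +
   block_mx (X - D) 0 0 (block_mx (X - D) 0 0 (X - D)).
Proof.
by rewrite /S3 !add_block_mx !addr0 -!(Mi_X D X).
Qed.

Lemma S3_rank (X : 'M[F]_m) l1 l2 l3 g12 g13 g23 :
  l1 != l2 -> l1 != l3 -> l2 != l3 ->
  ~~ eigenvalue A l1 -> ~~ eigenvalue A l2 -> ~~ eigenvalue A l3 ->
  eigenvalue (block_mx A B C X) l1 ->
  eigenvalue (block_mx A B C X) l2 ->
  eigenvalue (block_mx A B C X) l3 ->
  (\rank (S3 A B C X l1 l2 l3 g12 g13 g23) <= 3 * m - 3)%N.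
Proof.
move=> d12 d13 d23 n1 n2 n3 e1 e2 e3.
have [a [b [e [x [y [z ->]]]]]] := S3_fact B C X g12 g13 g23
  (unit_noneig n1) (unit_noneig n2) (unit_noneig n3) d12 d13 d23.
apply: leq_trans (mxrankM_maxl _ _) _.
apply: leq_trans (mxrankM_maxr _ _) _.
rewrite !rank_diag_block_mx.
have := Mi_sing n1 e1; have := Mi_sing n2 e2; have := Mi_sing n3 e3.
lia.
Qed.
End Final.

Theorem mainTheorem3 (R : realType) (n m : nat) (A : 'M[R[i]]_n) (B : 'M[R[i]]_(n, m))
  (C : 'M[R[i]]_(m, n)) (D : 'M[R[i]]_m) (l1 l2 l3 : R[i]) (X : 'M[R[i]]_m) :
  (3 <= m)%N ->
  l1 != l2 -> l1 != l3 -> l2 != l3 ->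
  ~~ eigenvalue A l1 -> ~~ eigenvalue A l2 -> ~~ eigenvalue A l3 ->
  eigenvalue (block_mx A B C X) l1 ->
  eigenvalue (block_mx A B C X) l2 ->
  eigenvalue (block_mx A B C X) l3 ->
  forall g12 g13 g23 : R[i],
    sval_j (3 * m - 2) (S3 A B C D l1 l2 l3 g12 g13 g23) <= spec_norm (X - D).
Proof.
move=> m3 d12 d13 d23 n1 n2 n3 e1 e2 e3 g12 g13 g23.
have rk := S3_rank g12 g13 g23 d12 d13 d23 n1 n2 n3 e1 e2 e3.
rewrite (S3_add A B C D X) in rk.
have rk' : (\rank (S3 A B C D l1 l2 l3 g12 g13 g23 +
          block_mx (X - D) 0 0 (block_mx (X - D) 0 0 (X - D)))%R < 3 * m - 2)%N.
  by apply: leq_ltn_trans rk _; lia.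
have kq : (0 < 3 * m - 2 <= m + (m + m))%N by apply/andP; split; lia.
have H := core kq rk' (diag3_bound (@upper _ _ (X - D))).
rewrite /spec_norm /sval_j /=.
have nn (q : nat) (M : 'M[R[i]]_q) j : (j < q)%N -> nth 0 (sq_svals M) j \is Num.nneg.
  move=> jq; rewrite nnegrE; have /allP := ss_ge0 M; apply.
  by rewrite mem_nth // ss_size.
rewrite ler_sqrtC ?nn //.
all: try (rewrite -subn1); lia.
Qed.
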